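(* Let $A$ be a ghor algebra with cycle algebra $S$, and let $\mathfrak{q} \in \operatorname{Spec}S$. Then every subpath of a locally invertible cycle in the cyclic localization $A_{\mathfrak{q}}$ is locally invertible.
   Context: $k$ is an algebraically closed field; $Q$ is a dimer quiver on a compact orientable surface $\Sigma$ (smooth or with two points identified), i.e. a quiver embedded in $\Sigma$ such that each component of $\Sigma\setminus Q$ is simply connected and bounded by an oriented cycle (unit cycle). A perfect matching is a set of arrows $x$ meeting each unit cycle in exactly one arrow; $\mathcal{P}$ is the set of them. With $n=|Q_0|$, $\eta: kQ \to M_n(k[\mathcal{P}])$ is the algebra map $\eta(e_i)=e_{ii}$, $\eta(a) = e_{\operatorname{h}(a),\operatorname{t}(a)}\prod_{x\ni a} x$, and $A = kQ/\ker\eta$ is the ghor algebra. Via $\eta$, $A$ is a matrix ring $[A_{ij}] \subseteq M_n(B)$ with $B = k[\mathcal{P}]$, where $A_{ij}\subseteq B$ is the set of single nonzero entries of images of elements of $e_iAe_j$, and $A_i := A_{ii}$. The cycle algebra is $S = k[\cup_i A_i]$. For $\mathfrak{q} \in \operatorname{Spec}S$, the cyclic localization is $A_{\mathfrak{q}} = \langle [A_{ij}(A_j)_{\mathfrak{q}\cap A_j}]_{i,j}\rangle \subseteq M_n(\operatorname{Frac}B)$, where $(A_j)_{\mathfrak{q}\cap A_j}$ is the localization of $A_j$ at the prime $\mathfrak{q}\cap A_j$. A path $p$ (with tail $\operatorname{t}(p)$, head $\operatorname{h}(p)$) is locally invertible in $A_{\mathfrak{q}}$ if there is $q \in e_{\operatorname{t}(p)}A_{\mathfrak{q}}e_{\operatorname{h}(p)}$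 with $qp = e_{\operatorname{t}(p)}$ and $pq = e_{\operatorname{h}(p)}$. *)

(* Defs.v *)
From HB Require Import structures.
From mathcomp Require Import all_boot all_order all_algebra all_fingroup.
From mathcomp Require Import fraction.
From mathcomp Require Import mpoly.

Set Implicit Arguments.
Unset Strict Implicit.
Unset Printing Implicit Defensive.

Import GRing.Theory.
Local Open Scope ring_scope.

Section Ghor.

(* [tl] and head [hd].  The embedding in the surface is encoded             *)
(* combinatorially: [sp a] (resp. [sm a]) is the arrow following [a] in the *)
(* boundary of the positively (resp. negatively) oriented unit cycle        *)
(* containing [a]; the unit cycles are the orbits of [sp] and [sm].         *)
Variables (n : nat) (Ar : finType) (tl hd : Ar -> 'I_n) (sp sm : {perm Ar}).

(* rotation around the head of an arrow: a |-> sm^-1 (sp a) *)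
Definition rot : {perm Ar} := (sp * sm^-1)%g.

(* number of "corners" (links) at vertex v : rot-orbits of arrows into v *)
Definition nlinks (v : 'I_n) : nat :=
  #|[set porbit rot a | a in [set a | hd a == v]]|.

Definition adjv : rel 'I_n :=
  fun v w => [exists a, ((tl a == v) && (hd a == w)) || ((hd a == v) && (tl a == w))].

(* Q is a dimer quiver on a compact connected orientable surface, either    *)
(* smooth (every vertex has one link) or with two points identified (exactly *)
(* one vertex has two links).                                               *)
Definition is_dimer : Prop :=
  [/\ (forall a, tl (sp a) = hd a),
      (forall a, tl (sm a) = hd a),
      (forall v, (1 <= nlinks v <= 2)%N),
      (forall v w, nlinks v = 2%N -> nlinks w = 2%N -> v = w)
    & (forall v w, connect adjv v w)].

Definition perfectb (x : {set Ar}) : bool :=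
  [forall a, (#|x :&: porbit sp a| == 1%N) && (#|x :&: porbit sm a| == 1%N)].

Definition PM := {x : {set Ar} | perfectb x}.

Variable k : closedFieldType.

Definition B := {mpoly k[#|{: PM}|]}.

Definition pmvar (x : PM) : B := 'X_(enum_rank x).

Definition amono (a : Ar) : B := \prod_(x : PM | a \in val x) pmvar x.

(* Paths: a pair (tail vertex, list of arrows in traversal order).          *)
Definition qpath := ('I_n * seq Ar)%type.

Fixpoint path_ok (v : 'I_n) (l : seq Ar) : bool :=
  if l is a :: l' then (tl a == v) && path_ok (hd a) l' else true.

Definition is_path (p : qpath) : bool := path_ok p.1 p.2.
Definition ptail (p : qpath) : 'I_n := p.1.
Definition phead (p : qpath) : 'I_n := last p.1 (map hd p.2).

Definition pmono (p : qpath) : B := \prod_(a <- p.2) amono a.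

Definition eta_path (p : qpath) : 'M[B]_n :=
  pmono p *: delta_mx (phead p) (ptail p).

(* The ghor algebra A, identified with eta(kQ) inside M_n(B). *)
Definition inA (M : 'M[B]_n) : Prop :=
  exists s : seq (k * qpath),
    all (fun cp => is_path cp.2) s /\ M = \sum_(cp <- s) ((cp.1%:MP : B) *: eta_path cp.2).

Definition idem (i : 'I_n) : 'M[B]_n := delta_mx i i.

(* A_ij : the (single nonzero) entries of elements of e_i A e_j *)
Definition Aij (i j : 'I_n) (f : B) : Prop :=
  exists M, [/\ inA M, idem i *m M *m idem j = M & M i j = f].

Definition Ai (i : 'I_n) : B -> Prop := Aij i i.

Inductive kgen (G : B -> Prop) : B -> Prop :=
| kgen_base f : G f -> kgen G f
| kgen_one : kgen G 1
| kgen_add f g : kgen G f -> kgen G g -> kgen G (f + g)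
| kgen_mul f g : kgen G f -> kgen G g -> kgen G (f * g)
| kgen_scale (c : k) f : kgen G f -> kgen G (c *: f).

Definition cycS : B -> Prop := kgen (fun f => exists i, Ai i f).

Definition primeS (q : B -> Prop) : Prop :=
  [/\ (forall f, q f -> cycS f) /\ q 0,
      (forall f g, q f -> q g -> q (f + g)),
      (forall f g, cycS f -> q g -> q (f * g)),
      ~ q 1
    & (forall f g, cycS f -> cycS g -> q (f * g) -> q f \/ q g)].

Definition FB := {fraction B}.

Definition toFB (f : B) : FB := @FracField.tofrac B f.

Definition Aloc (q : B -> Prop) (j : 'I_n) (z : FB) : Prop :=
  exists f g, [/\ Ai j f, Ai j g, ~ q g & z = toFB f / toFB g].

Definition locgen (q : B -> Prop) (M : 'M[FB]_n) : Prop :=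
  forall i j, exists a z, [/\ Aij i j a, Aloc q j z & M i j = toFB a * z].

Inductive mxgen (G : 'M[FB]_n -> Prop) : 'M[FB]_n -> Prop :=
| mxgen_base M : G M -> mxgen G M
| mxgen_one : mxgen G 1%:M
| mxgen_add M N : mxgen G M -> mxgen G N -> mxgen G (M + N)
| mxgen_mul M N : mxgen G M -> mxgen G N -> mxgen G (M *m N)
| mxgen_scale (c : k) M : mxgen G M -> mxgen G (toFB (c%:MP) *: M).

Definition Aq (q : B -> Prop) : 'M[FB]_n -> Prop := mxgen (locgen q).

Definition frac_mx (M : 'M[B]_n) : 'M[FB]_n := map_mx (toFB) M.

Definition fidem (i : 'I_n) : 'M[FB]_n := delta_mx i i.

Definition loc_invertible (q : B -> Prop) (p : qpath) : Prop :=
  exists Q, [/\ Aq q Q,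
               fidem (ptail p) *m Q *m fidem (phead p) = Q,
               Q *m frac_mx (eta_path p) = fidem (ptail p)
             & frac_mx (eta_path p) *m Q = fidem (phead p)].

Definition is_cycle (c : qpath) : bool :=
  [&& is_path c, c.2 != [::] & phead c == ptail c].

Definition subpath (p c : qpath) : Prop :=
  is_path p /\ exists l1 l2, c.2 = l1 ++ p.2 ++ l2 /\ p.1 = last c.1 (map hd l1).

End Ghor.

(* Main.v *)
Require Import Defs.
From HB Require Import structures.
From mathcomp Require Import all_boot all_order all_algebra all_fingroup.
From mathcomp Require Import fraction.
From mathcomp Require Import mpoly.
From mathcomp Require Import ring.

Set Implicit Arguments.
Unset Strict Implicit.
Unset Printing Implicit Defensive.
Import GRing.Theory.

Local Open Scope ring_scope.

Lemma dmd (R : comNzRingType) n (i j : 'I_n) (M : 'M[R]_n) :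
  delta_mx i i *m M *m delta_mx j j = M i j *: delta_mx i j.
Proof.
apply/matrixP=> a b; rewrite !mxE (bigD1 j) //= big1; last first.
  by move=> c /negbTE cj; rewrite [delta_mx j j c b]mxE cj /= mulr0.
rewrite !mxE (bigD1 i) //= big1; last first.
  by move=> d /negbTE di; rewrite [delta_mx i i a d]mxE di andbF mul0r.
rewrite !mxE !eqxx; case: (a == i); case: (b == j); rewrite /= ?mul1r ?mulr1 ?mul0r ?mulr0 ?addr0 //.
Qed.

Section S.

Lemma sdm (R : comNzRingType) n (i j l : 'I_n) (a b : R) :
  (a *: delta_mx i j) *m (b *: delta_mx j l) = (a * b) *: delta_mx i l.
Proof. by rewrite -scalemxAl -scalemxAr mul_delta_mx scalerA. Qed.

Lemma path_ok_cat (n : nat) (Ar : finType) (tl hd : Ar -> 'I_n) v l l' :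
  path_ok tl hd v (l ++ l') = path_ok tl hd v l && path_ok tl hd (last v (map hd l)) l'.
Proof.
elim: l v => [//|a l IH] v /=; by rewrite IH andbA.
Qed.
Variables (n : nat) (Ar : finType) (tl hd : Ar -> 'I_n)
    (sp sm : {perm Ar}) (k : closedFieldType).

Lemma frac_eta (p : qpath n Ar) :
  frac_mx (eta_path hd sp sm k p) =
  toFB (pmono sp sm k p) *: delta_mx (phead hd p) (ptail p).
Proof.
apply/matrixP=> a b; rewrite /frac_mx /eta_path !mxE.
by case: (_ && _); rewrite /= ?mulr1 ?mulr0 /toFB ?rmorph0.
Qed.

Lemma inA_eta (p : qpath n Ar) : is_path tl hd p ->
  inA tl hd (eta_path hd sp sm k p).
Proof.
move=> hp; exists [:: (1, p)]; split; first by rewrite /= hp.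
by rewrite big_cons big_nil addr0 /= mpolyC1 scale1r.
Qed.

Lemma inA0 : inA tl hd (0 : 'M[B sp sm k]_n).
Proof. by exists [::]; rewrite big_nil. Qed.

Lemma Ai1 (j : 'I_n) : @Ai _ _ tl hd sp sm k j 1.
Proof.
exists (eta_path hd sp sm k (j, [::])); split.
- by apply: inA_eta.
- by rewrite /eta_path /idem /pmono /phead /ptail /= big_nil scale1r !mul_delta_mx.
- by rewrite /eta_path /pmono /phead /ptail /= big_nil scale1r mxE !eqxx.
Qed.

Lemma Aq_eta (q : B sp sm k -> Prop) (p : qpath n Ar) :
  ~ q 1 -> is_path tl hd p -> Aq tl hd q (frac_mx (eta_path hd sp sm k p)).
Proof.
move=> nq1 hp; apply: mxgen_base => i j.
exists (eta_path hd sp sm k p i j), 1; split.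
- have [/andP[/eqP -> /eqP ->]|ne] := boolP ((i == phead hd p) && (j == ptail p)).
    exists (eta_path hd sp sm k p); split; first exact: inA_eta.
      by rewrite /eta_path /idem -scalemxAr -scalemxAl !mul_delta_mx.
    done.
  exists 0; split; first exact: inA0.
    by rewrite mulmx0 mul0mx.
  by rewrite /eta_path !mxE (negbTE ne) mulr0.
- exists 1, 1; split; try exact: Ai1.
  - exact: nq1.
  by rewrite /toFB tofrac1 divr1.
- by rewrite /frac_mx mxE mulr1.
Qed.

Lemma toFBM (x y : B sp sm k) : toFB (x * y) = toFB x * toFB y.
Proof. exact: rmorphM. Qed.
End S.

Theorem lemma4p4 (n : nat) (Ar : finType) (tl hd : Ar -> 'I_n)
    (sp sm : {perm Ar}) (k : closedFieldType) (q : B sp sm k -> Prop) :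
  is_dimer tl hd sp sm ->
  primeS tl hd q ->
  forall c p : qpath n Ar,
    is_cycle tl hd c ->
    loc_invertible tl hd q c ->
    subpath tl hd p c ->
    loc_invertible tl hd q p.
Proof.
move=> _ [_ _ _ nq1 _] [t lc] [tp lp] /and3P[hc _ /eqP hct] [Q [AQ QE Q1 Q2]]
  [hpp [l1 [l2 [hl htp]]]].
simpl in hl, htp; subst lc tp.
set p := (_, lp) in hpp *.
set r1 := (t, l1).
set r2 := (phead hd p, l2).
set c := (t, _) in hc hct Q1 Q2 QE.
have hr1 : is_path tl hd r1.
  by move: hc; rewrite /is_path /= path_ok_cat => /andP[].
have hr2 : is_path tl hd r2.
  by move: hc; rewrite /is_path /= !path_ok_cat => /and3P[].
have ec : phead hd c = phead hd r2.
  by rewrite /phead /= !map_cat !last_cat.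
have tc : ptail c = t by [].
have hc2 : phead hd r2 = t by rewrite -ec hct.
have mc : pmono sp sm k c = pmono sp sm k r1 * pmono sp sm k p * pmono sp sm k r2.
  by rewrite /pmono /= !big_cat /= mulrA.
rewrite /fidem hct tc in QE Q1 Q2.
rewrite frac_eta ec hc2 tc mc in Q1 Q2.
rewrite dmd in QE.
set qq := Q t t in QE.
have eq1 : qq * (toFB (pmono sp sm k r1 * pmono sp sm k p * pmono sp sm k r2)) = 1.
  move: Q1; rewrite -QE -scalemxAl -scalemxAr mul_delta_mx scalerA => /matrixP /(_ t t).
  by rewrite !mxE eqxx mulr1.
rewrite !toFBM in eq1.
have eQ : Q = qq *: delta_mx t t by rewrite QE.
set a1 := toFB (pmono sp sm k r1) in eq1.
set a2 := toFB (pmono sp sm k r2) in eq1.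
set ap := toFB (pmono sp sm k p) in eq1.
have er1 : frac_mx (eta_path hd sp sm k r1) = a1 *: delta_mx (ptail p) t by rewrite frac_eta.
have er2 : frac_mx (eta_path hd sp sm k r2) = a2 *: delta_mx t (phead hd p) by rewrite frac_eta hc2.
have ep : frac_mx (eta_path hd sp sm k p) = ap *: delta_mx (phead hd p) (ptail p) by rewrite frac_eta.
exists (frac_mx (eta_path hd sp sm k r1) *m Q *m frac_mx (eta_path hd sp sm k r2)).
have tp : ptail p = phead hd r1 by [].
split.
- apply: mxgen_mul; first apply: mxgen_mul => //.
    exact: Aq_eta.
  exact: Aq_eta.
- by rewrite /fidem er1 er2 eQ !sdm -scalemxAr -scalemxAl !mul_delta_mx.
- rewrite /fidem er1 er2 eQ ep !sdm.
  have -> : a1 * qq * a2 * ap = 1 by rewrite -eq1; ring.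
  by rewrite scale1r.
- rewrite /fidem er1 er2 eQ ep !sdm.
  have -> : ap * (a1 * qq * a2) = 1 by rewrite -eq1; ring.
  by rewrite scale1r.
Qed.
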